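(* Let $q\ge8$ be even. For $\mu\in\mathbb{F}_q$ let $\ell_\mu$ be the line through $\mathbf{P}(0,\mu,0,1)$ and $\mathbf{P}(1,0,1,0)$, and let $L_c$ be the line through $\mathbf{P}(1,0,0,1)$ and $\mathbf{P}(0,0,1,0)$. Then for any $\mu',\mu''\in\mathbb{F}_q\setminus\{0,1\}$ with $\mu'\ne\mu''$, the lines $\ell_{\mu'}$ and $\ell_{\mu''}$ lie in different orbits of $G_q$. Moreover, no line $\ell_\mu$ with $\mu\in\mathbb{F}_q\setminus\{0,1\}$ lies in the $G_q$-orbit of $L_c$.
   Context: Points of $\mathrm{PG}(3,q)$ are written $\mathbf{P}(x_0,x_1,x_2,x_3)$ in homogeneous coordinates over the field $\mathbb{F}_q$. The twisted cubic is $\mathscr{C}=\{\mathbf{P}(t^3,t^2,t,1):t\in\mathbb{F}_q\}\cup\{\mathbf{P}(1,0,0,0)\}$ and $G_q$ is the group of projectivities of $\mathrm{PG}(3,q)$ fixing $\mathscr{C}$ (for $q\ge5$, $G_q\cong\mathrm{PGL}(2,q)$). Two lines lie in the same orbit if some element of $G_q$ maps one onto the other. *)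

(* Defs.v *)
From HB Require Import structures.
From mathcomp Require Import all_boot all_order all_algebra all_field.
Set Implicit Arguments. Unset Strict Implicit. Unset Printing Implicit Defensive.
Import GRing.Theory.
Local Open Scope ring_scope.

(* Points of PG(3,q) are represented by nonzero row vectors of 'rV[F]_4;
   two nonzero vectors represent the same point iff they span the same
   row space.  Lines are 2 x 4 matrices whose row space is 2-dimensional.
   Projectivities act on row vectors by right multiplication v |-> v *m A,
   A invertible. *)

Section PG3.
Variable F : finFieldType.

Definition rv4 (x0 x1 x2 x3 : F) : 'rV[F]_4 :=
  \row_(i < 4) nth 0 [:: x0; x1; x2; x3] i.

Definition line_through (u v : 'rV[F]_4) : 'M[F]_(2, 4) := col_mx u v.

Definition on_cubic (v : 'rV[F]_4) : bool :=
  (v != 0) &&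
  ([exists t : F, (v == rv4 (t ^+ 3) (t ^+ 2) t 1)%MS]
   || (v == rv4 1 0 0 0)%MS).

Definition fixes_cubic (A : 'M[F]_4) : Prop :=
  A \in unitmx /\ forall v : 'rV[F]_4, on_cubic (v *m A) = on_cubic v.

Definition same_orbit (L1 L2 : 'M[F]_(2, 4)) : Prop :=
  exists A : 'M[F]_4, fixes_cubic A /\ (L1 *m A == L2)%MS.

Definition ell (mu : F) : 'M[F]_(2, 4) :=
  line_through (rv4 0 mu 0 1) (rv4 1 0 1 0).

Definition Lc : 'M[F]_(2, 4) :=
  line_through (rv4 1 0 0 1) (rv4 0 0 1 0).

End PG3.

(* Main.v *)
Require Import Defs.
From mathcomp Require Import all_boot all_order all_algebra all_field.
From mathcomp Require Import ring.
Import GRing.Theory.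
Set Implicit Arguments. Unset Strict Implicit.
Local Open Scope ring_scope.

Definition o0 : 'I_4 := @Ordinal 4 0 erefl.
Definition o1 : 'I_4 := @Ordinal 4 1 erefl.
Definition o2 : 'I_4 := @Ordinal 4 2 erefl.
Definition o3 : 'I_4 := @Ordinal 4 3 erefl.

Lemma sum4 (R : nmodType) (f : 'I_4 -> R) :
  \sum_(i < 4) f i = f o0 + f o1 + f o2 + f o3.
Proof.
rewrite !big_ord_recl big_ord0 addr0 !addrA.
by congr (_ + _ + _ + _); congr f; apply: val_inj.
Qed.

Lemma mulE (F : finFieldType) (v : 'rV[F]_4) (A : 'M[F]_4) j :
  (v *m A) 0 j = v 0 o0 * A o0 j + v 0 o1 * A o1 j + v 0 o2 * A o2 j + v 0 o3 * A o3 j.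
Proof. by rewrite mxE sum4. Qed.

Lemma rv4E0 (F : finFieldType) (a b c d : F) : rv4 a b c d 0 o0 = a. Proof. by rewrite !mxE. Qed.
Lemma rv4E1 (F : finFieldType) (a b c d : F) : rv4 a b c d 0 o1 = b. Proof. by rewrite !mxE. Qed.
Lemma rv4E2 (F : finFieldType) (a b c d : F) : rv4 a b c d 0 o2 = c. Proof. by rewrite !mxE. Qed.
Lemma rv4E3 (F : finFieldType) (a b c d : F) : rv4 a b c d 0 o3 = d. Proof. by rewrite !mxE. Qed.
Definition rv4E := (rv4E0, rv4E1, rv4E2, rv4E3).

Lemma rv4_ext (F : finFieldType) (v : 'rV[F]_4) : v = rv4 (v 0 o0) (v 0 o1) (v 0 o2) (v 0 o3).
Proof.
apply/rowP => j; rewrite mxE; case: j => [[|[|[|[|j]]]] hj] //=;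
 by congr (v 0 _); apply: val_inj.
Qed.

Lemma poly7 (F : finFieldType) (c : nat -> F) : (7 < #|F|)%N ->
  (forall t : F, \sum_(i < 7) c i * t ^+ i = 0) -> forall i, (i < 7)%N -> c i = 0.
Proof.
move=> hF H i hi.
have -> : c i = (\poly_(j < 7) c j)`_i by rewrite coef_poly hi.
suff -> : \poly_(j < 7) c j = 0 by rewrite coef0.
apply/eqP; apply: contraT => nz.
have := max_poly_roots nz (rs := enum F) _ (enum_uniq _).
rewrite -cardE.
have hs := size_poly 7 c.
have hall : all (root (\poly_(j < 7) c j)) (enum F).
  apply/allP => t _; rewrite /root horner_poly; apply/eqP; exact: H.
move=> /(_ hall) hh; have := leq_trans hh hs.
by rewrite ltnNge (ltnW hF).
Qed.

Lemma poly7' (F : finFieldType) (c0 c1 c2 c3 c4 c5 c6 : F) : (7 < #|F|)%N ->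
  (forall t : F, c0 + c1 * t + c2 * t^+2 + c3 * t^+3 + c4 * t^+4 + c5 * t^+5 + c6 * t^+6 = 0) ->
  [/\ c0 = 0, c1 = 0, c2 = 0, c3 = 0 & [/\ c4 = 0, c5 = 0 & c6 = 0]].
Proof.
move=> hF H.
have P := @poly7 F (nth 0 [:: c0; c1; c2; c3; c4; c5; c6]) hF.
have {}P : forall i, (i < 7)%N -> nth 0 [:: c0; c1; c2; c3; c4; c5; c6] i = 0.
  apply: P => t; rewrite !big_ord_recl big_ord0 /=.
  rewrite -[RHS](H t) /=. ring.
by split; [exact: (P 0%N) | exact: (P 1%N) | exact: (P 2%N) | exact: (P 3%N) |
  split; [exact: (P 4%N) | exact: (P 5%N) | exact: (P 6%N)]].
Qed.

Definition qs (F : finFieldType) (k : nat) (a0 a1 a2 a3 : F) : F :=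
  match k with 0 => a0 * a2 + a1 ^+ 2 | 1 => a1 * a3 + a2 ^+ 2 | _ => a0 * a3 + a1 * a2 end.
Definition bs (F : finFieldType) (k : nat) (a0 a1 a2 a3 b0 b1 b2 b3 : F) : F :=
  match k with 0 => a0 * b2 + a2 * b0 | 1 => a1 * b3 + a3 * b1
  | _ => a0 * b3 + a3 * b0 + a1 * b2 + a2 * b1 end.
Definition qv (F : finFieldType) k (v : 'rV[F]_4) := qs k (v 0 o0) (v 0 o1) (v 0 o2) (v 0 o3).
Definition bv (F : finFieldType) k (u v : 'rV[F]_4) :=
  bs k (u 0 o0) (u 0 o1) (u 0 o2) (u 0 o3) (v 0 o0) (v 0 o1) (v 0 o2) (v 0 o3).
Definition gq (F : finFieldType) k (A : 'M[F]_4) i := qv k (row i A).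
Definition gb (F : finFieldType) k (A : 'M[F]_4) i j := bv k (row i A) (row j A).
Definition alpha (F : finFieldType) k (A : 'M[F]_4) := gb k A o0 o2.
Definition beta (F : finFieldType) k (A : 'M[F]_4) := gb k A o1 o3.
Definition gamma (F : finFieldType) k (A : 'M[F]_4) := gb k A o0 o3.

Lemma char2_eq (F : finFieldType) (h2 : (2:F) = 0) (a b : F) : a + b = 0 -> b = a.
Proof.
move=> H; have haa : a + a = 0 by rewrite -mulr2n -mulr_natr h2 mulr0.
have e1 : a = - b by apply/eqP; rewrite -addr_eq0 H.
have e2 : a = - a by apply/eqP; rewrite -addr_eq0 haa.
by rewrite -[b]opprK -e1 -e2.
Qed.

Lemma expand (F : finFieldType) (h2 : (2:F) = 0) k (A : 'M[F]_4) v :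
  qv k (v *m A) =
    v 0 o0 ^+ 2 * gq k A o0 + v 0 o1 ^+ 2 * gq k A o1 + v 0 o2 ^+ 2 * gq k A o2
  + v 0 o3 ^+ 2 * gq k A o3 + v 0 o0 * v 0 o1 * gb k A o0 o1
  + v 0 o0 * v 0 o2 * gb k A o0 o2 + v 0 o0 * v 0 o3 * gb k A o0 o3
  + v 0 o1 * v 0 o2 * gb k A o1 o2 + v 0 o1 * v 0 o3 * gb k A o1 o3
  + v 0 o2 * v 0 o3 * gb k A o2 o3.
Proof.
rewrite /gq /gb /qv /bv !mulE !mxE.
case: k => [|[|k]] /=; ring: h2.
Qed.

Lemma NE (F : finFieldType) (h2 : (2:F) = 0) (hF : (7 < #|F|)%N) k (A : 'M[F]_4) :
  (forall t, qv k (rv4 (t^+3) (t^+2) t 1 *m A) = 0) ->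
  forall v, qv k (v *m A) = alpha k A * qv 0 v + beta k A * qv 1 v + gamma k A * qv 2 v.
Proof.
move=> H.
have Ht : forall t : F, gq k A o3 + gb k A o2 o3 * t + (gb k A o1 o3 + gq k A o2) * t^+2
  + (gb k A o0 o3 + gb k A o1 o2) * t^+3 + (gb k A o0 o2 + gq k A o1) * t^+4
  + gb k A o0 o1 * t^+5 + gq k A o0 * t^+6 = 0.
  move=> t; rewrite -(H t) expand // !rv4E; ring.
have [e0 e1 e2 e3 [e4 e5 e6]] := poly7' hF Ht.
move=> v; rewrite expand // e0 e1 e5 e6 (char2_eq h2 e2) (char2_eq h2 e3) (char2_eq h2 e4).
rewrite /alpha /beta /gamma /qv /qs /=; ring: h2.
Qed.

Definition cub (F : finFieldType) (t : F) := rv4 (t^+3) (t^+2) t 1.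

Lemma on_cubic_q (F : finFieldType) (h2 : (2:F) = 0) k (v : 'rV[F]_4) :
  on_cubic v -> qv k v = 0.
Proof.
case/andP => _ /orP [/existsP [t /andP [H _]] | /andP [H _]]; case/submxP: H => D ->;
 rewrite /qv !mxE !big_ord1 !rv4E; case: k => [|[|k]] /=; ring: h2.
Qed.

Lemma cub_on (F : finFieldType) (t : F) : on_cubic (cub t).
Proof.
apply/andP; split.
  apply/eqP => H; have := congr1 (fun M : 'rV[F]_4 => M 0 o3) H.
  by rewrite /cub rv4E mxE => /eqP; rewrite oner_eq0.
by apply/orP; left; apply/existsP; exists t; rewrite submx_refl.
Qed.

Lemma fix_t (F : finFieldType) (h2 : (2:F) = 0) (A : 'M[F]_4) :
  fixes_cubic A -> forall k t, qv k (rv4 (t^+3) (t^+2) t 1 *m A) = 0.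
Proof. by case=> _ H k t; apply: (on_cubic_q h2); rewrite H (cub_on t). Qed.

Lemma fix_inv (F : finFieldType) (h2 : (2:F) = 0) (A : 'M[F]_4) :
  fixes_cubic A -> forall k t, qv k (rv4 (t^+3) (t^+2) t 1 *m invmx A) = 0.
Proof.
case=> uA H k t; apply: (on_cubic_q h2); rewrite -H mulmxKV //; exact: (cub_on t).
Qed.

Lemma polar (F : finFieldType) (h2 : (2:F) = 0) k (x y : 'rV[F]_4) :
  bv k x y = qv k (x + y) + qv k x + qv k y.
Proof. rewrite /bv /qv !mxE; case: k => [|[|k]] /=; ring: h2. Qed.

Lemma polarA (F : finFieldType) (h2 : (2:F) = 0) (A : 'M[F]_4) :
  (forall k v, qv k (v *m A) = alpha k A * qv 0 v + beta k A * qv 1 v + gamma k A * qv 2 v) ->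
  forall k x y, bv k (x *m A) (y *m A) =
     alpha k A * bv 0 x y + beta k A * bv 1 x y + gamma k A * bv 2 x y.
Proof.
move=> N k x y.
rewrite (polar h2 k) -mulmxDl !N !(polar h2 _ x y); ring.
Qed.

Lemma zero_rv4 (F : finFieldType) : rv4 0 0 0 0 = 0 :> 'rV[F]_4.
Proof. by apply/rowP => j; rewrite !mxE; case: j => [[|[|[|[|]]]]]. Qed.

Lemma rad (F : finFieldType) (h2 : (2:F) = 0) (a b c : F) (kp : 'rV[F]_4) :
  kp != 0 -> (forall y, a * bv 0 kp y + b * bv 1 kp y + c * bv 2 kp y = 0) ->
  a * b + c ^+ 2 = 0.
Proof.
move=> nz H.
have E0 := H (rv4 1 0 0 0); have E1 := H (rv4 0 1 0 0).
have E2 := H (rv4 0 0 1 0); have E3 := H (rv4 0 0 0 1).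
rewrite /bv !rv4E /= ?mulr0 ?mul0r ?mulr1 ?addr0 ?add0r in E0 E1 E2 E3.
set k0 := kp 0 o0 in E0 E1 E2 E3; set k1 := kp 0 o1 in E0 E1 E2 E3.
set k2 := kp 0 o2 in E0 E1 E2 E3; set k3 := kp 0 o3 in E0 E1 E2 E3.
rewrite ?mulr0 ?addr0 ?add0r in E0 E1 E2 E3.
have K2 : (a * b + c ^+ 2) * k2 = b * (a * k2 + c * k3) + c * (b * k3 + c * k2) by ring: h2.
have K3 : (a * b + c ^+ 2) * k3 = a * (b * k3 + c * k2) + c * (a * k2 + c * k3) by ring: h2.
have K0 : (a * b + c ^+ 2) * k0 = b * (a * k0 + c * k1) + c * (b * k1 + c * k0) by ring: h2.
have K1 : (a * b + c ^+ 2) * k1 = a * (b * k1 + c * k0) + c * (a * k0 + c * k1) by ring: h2.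
rewrite E0 E1 !mulr0 addr0 in K2 K3; rewrite E2 E3 !mulr0 addr0 in K0 K1.
apply/eqP; apply: contraNT nz => hne.
move/eqP: K0; move/eqP: K1; move/eqP: K2; move/eqP: K3.
rewrite !mulf_eq0 (negbTE hne) /= => /eqP e3 /eqP e2 /eqP e1 /eqP e0.
by rewrite (rv4_ext kp) -/k0 -/k1 -/k2 -/k3 e0 e1 e2 e3 zero_rv4.
Qed.

Lemma qvE (F : finFieldType) k (a b c d : F) : qv k (rv4 a b c d) = qs k a b c d.
Proof. by rewrite /qv !rv4E. Qed.
Lemma bvE (F : finFieldType) k (a b c d a' b' c' d' : F) :
  bv k (rv4 a b c d) (rv4 a' b' c' d') = bs k a b c d a' b' c' d'.
Proof. by rewrite /bv !rv4E. Qed.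

Lemma nucleus (F : finFieldType) (h2 : (2:F) = 0) (hF : (7 < #|F|)%N) (A : 'M[F]_4) :
  fixes_cubic A ->
  [/\ forall k v, qv k (v *m A) = alpha k A * qv 0 v + beta k A * qv 1 v + gamma k A * qv 2 v,
      alpha 2 A = 0, beta 2 A = 0 & gamma 2 A != 0].
Proof.
move=> FA; have uA : A \in unitmx by case: FA.
have NEA k v := NE h2 hF (fix_t h2 FA k) v.
have NEI k v := NE h2 hF (fix_inv h2 FA k) v.
have PA := polarA h2 NEA.
set a0 := alpha 0 A; set a1 := alpha 1 A; set a2 := alpha 2 A.
set b0 := beta 0 A; set b1 := beta 1 A; set b2 := beta 2 A.
set c0 := gamma 0 A; set c1 := gamma 1 A; set c2 := gamma 2 A.
have P : forall s : F, (a0 + s^+2 * a1 + s * a2) * (b0 + s^+2 * b1 + s * b2)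
   + (c0 + s^+2 * c1 + s * c2) ^+ 2 = 0.
  move=> s; set ks := rv4 0 0 s 1; set kp := ks *m invmx A.
  have kpA : kp *m A = ks by rewrite mulmxKV.
  apply: (@rad F h2 _ _ _ kp).
    apply/eqP => e; move: kpA; rewrite e mul0mx => /(congr1 (fun M : 'rV[F]_4 => M 0 o3)).
    by rewrite rv4E mxE => /eqP; rewrite eq_sym oner_eq0.
  move=> y.
  have : bv 0 (kp *m A) (y *m A) + s^+2 * bv 1 (kp *m A) (y *m A)
     + s * bv 2 (kp *m A) (y *m A) = 0.
    by rewrite kpA /bv !rv4E /=; ring: h2.
  rewrite !PA -/a0 -/a1 -/a2 -/b0 -/b1 -/b2 -/c0 -/c1 -/c2 => <-; ring.
have P' : forall s : F, (a0 * b0 + c0 ^+ 2) + (a0 * b2 + a2 * b0) * s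
   + (a0 * b1 + a1 * b0 + a2 * b2 + c2 ^+ 2) * s ^+ 2 + (a1 * b2 + a2 * b1) * s ^+ 3
   + (a1 * b1 + c1 ^+ 2) * s ^+ 4 + 0 * s ^+ 5 + 0 * s ^+ 6 = 0.
  by move=> s; rewrite -[RHS](P s); ring: h2.
have [_ Z1 _ Z3 _] := poly7' hF P'.
have S k w : qv k w = alpha k (invmx A) * (a0 * qv 0 w + b0 * qv 1 w + c0 * qv 2 w)
   + beta k (invmx A) * (a1 * qv 0 w + b1 * qv 1 w + c1 * qv 2 w)
   + gamma k (invmx A) * (a2 * qv 0 w + b2 * qv 1 w + c2 * qv 2 w).
  by rewrite -{1}(mulmxK uA w) NEI !NEA.
set p0 := alpha 0 (invmx A); set p1 := beta 0 (invmx A); set p2 := gamma 0 (invmx A).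
set r0 := alpha 1 (invmx A); set r1 := beta 1 (invmx A); set r2 := gamma 1 (invmx A).
have S01 := S 0%N (rv4 1 1 0 0); have S02 := S 0%N (rv4 0 0 1 1).
have S11 := S 1%N (rv4 1 1 0 0); have S12 := S 1%N (rv4 0 0 1 1).
rewrite !qvE /= ?(mul0r, mulr0, mul1r, mulr1, expr1n, expr0n, addr0, add0r) /= in S01 S02 S11 S12.
rewrite ?(mul0r, mulr0, mul1r, mulr1, expr1n, expr0n, addr0, add0r) /= in S01 S02 S11 S12.
have eb2 : b2 = 0.
  have e : b2 = b2 * (p0*a0+p1*a1+p2*a2) + a2 * (p0*b0+p1*b1+p2*b2)
    by rewrite -S01 -S02 mulr1 mulr0 addr0.
  rewrite e (_ : b2 * _ + a2 * _ = p0*(a0*b2+a2*b0) + p1*(a1*b2+a2*b1) + p2*(a2*b2*2)); last by ring.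
  by rewrite Z1 Z3 h2; ring.
have ea2 : a2 = 0.
  have e : a2 = a2 * (r0*b0+r1*b1+r2*b2) + b2 * (r0*a0+r1*a1+r2*a2)
    by rewrite -S11 -S12 mulr1 mulr0 addr0.
  rewrite e (_ : a2 * _ + b2 * _ = r0*(a0*b2+a2*b0) + r1*(a1*b2+a2*b1) + r2*(a2*b2*2)); last by ring.
  by rewrite Z1 Z3 h2; ring.
split => //.
apply/eqP => ec2.
have := NEA 2%N (rv4 1 0 0 1 *m invmx A).
rewrite mulmxKV // -/a2 -/b2 -/c2 ea2 eb2 ec2 !mul0r !addr0 qvE /=.
by rewrite mulr1 mulr0 addr0 => /eqP; rewrite oner_eq0.
Qed.

Lemma qvK0 (F : finFieldType) (v : 'rV[F]_4) : qv 0 v = v 0 o0 * v 0 o2 + v 0 o1 ^+ 2. Proof. by []. Qed.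
Lemma qvK1 (F : finFieldType) (v : 'rV[F]_4) : qv 1 v = v 0 o1 * v 0 o3 + v 0 o2 ^+ 2. Proof. by []. Qed.
Lemma qvK2 (F : finFieldType) (v : 'rV[F]_4) : qv 2 v = v 0 o0 * v 0 o3 + v 0 o1 * v 0 o2. Proof. by []. Qed.
Lemma bvK0 (F : finFieldType) (u v : 'rV[F]_4) : bv 0 u v = u 0 o0 * v 0 o2 + u 0 o2 * v 0 o0. Proof. by []. Qed.
Lemma bvK1 (F : finFieldType) (u v : 'rV[F]_4) : bv 1 u v = u 0 o1 * v 0 o3 + u 0 o3 * v 0 o1. Proof. by []. Qed.
Lemma bvK2 (F : finFieldType) (u v : 'rV[F]_4) :
  bv 2 u v = u 0 o0 * v 0 o3 + u 0 o3 * v 0 o0 + u 0 o1 * v 0 o2 + u 0 o2 * v 0 o1. Proof. by []. Qed.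

Lemma lin_rv4 (F : finFieldType) (x y a b c d a' b' c' d' : F) :
  x *: rv4 a b c d + y *: rv4 a' b' c' d' = rv4 (x*a + y*a') (x*b + y*b') (x*c + y*c') (x*d + y*d').
Proof. by apply/rowP => j; rewrite !mxE; case: j => [[|[|[|[|]]]]]. Qed.

Lemma line_img (F : finFieldType) (A : 'M[F]_4) (u w a b : 'rV[F]_4) :
  (col_mx u w *m A == col_mx a b)%MS ->
  exists x y z t, u *m A = x *: a + y *: b /\ w *m A = z *: a + t *: b.
Proof.
case/andP => H _; rewrite mul_col_mx col_mx_sub in H; case/andP: H => Hu Hw.
have sub1 (X : 'rV[F]_4) : (X <= col_mx a b)%MS -> exists x y, X = x *: a + y *: b.
  case/submxP => D ->; rewrite -[D](@hsubmxK _ 1 1 1) mul_row_col.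
  rewrite [lsubmx D]mx11_scalar [rsubmx D]mx11_scalar !mul_scalar_mx.
  by exists (lsubmx D 0 0), (rsubmx D 0 0).
have [x [y ->]] := sub1 _ Hu; have [z [t ->]] := sub1 _ Hw.
by exists x, y, z, t.
Qed.

Ltac from H h2 := match type of H with ?a = ?b =>
  transitivity a; [ring: h2 | rewrite H; ring: h2] end.

Lemma neq1 (F : finFieldType) (h2 : (2:F) = 0) (m : F) : m != 1 -> 1 + m != 0.
Proof. by move=> h; apply/eqP => /(char2_eq h2) e; rewrite e eqxx in h. Qed.

Lemma final_scalar (F : finFieldType) (h2 : (2:F) = 0)
  (m1 m2 x y z t a0 b0 a1 b1 c2 Y0 Y1 Y2 Y3 Z0 Z1 Z2 Z3 : F) :
  m1 != 0 -> m1 != 1 -> m2 != 0 -> m2 != 1 -> m1 != m2 -> c2 != 0 ->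
  x*y*(1+m2) = 0 -> z*t*(1+m2) = 0 ->
  (x*t + y*z)*(1+m2) = c2*(1+m1) ->
  y*(Y0+Y2) = b0 -> x*(m2*Y3 + Y1) = b1 ->
  t*(Z0+Z2) = a0 -> z*(m2*Z3 + Z1) = a1 ->
  y^+2 + x^+2* m2^+2 = a0* m1^+2 + b0* m1 ->
  x^+2* m2 + y^+2 = a1* m1^+2 + b1* m1 ->
  t^+2 + z^+2* m2^+2 = a0 + b0 ->
  z^+2* m2 + t^+2 = a1 + b1 -> False.
Proof.
move=> nz1 n11 nz2 n12 n12' nc2 H1 H2 H3 H4 H5 H6 H7 H8 H9 H10 H11.
have n1 := neq1 h2 n11; have n2 := neq1 h2 n12.
have hxy : x * y = 0 by move/eqP: H1; rewrite mulf_eq0 (negbTE n2) orbF => /eqP.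
have hzt : z * t = 0 by move/eqP: H2; rewrite mulf_eq0 (negbTE n2) orbF => /eqP.
have hne : x * t + y * z != 0.
  by apply/eqP => e; move: H3; rewrite e mul0r => /esym/eqP; rewrite mulf_eq0 (negbTE nc2) (negbTE n1).
have d12 : m2 - m1 != 0 by rewrite subr_eq0 eq_sym.
case: (eqVneq y 0) => [y0|ynz].
  move: hne; rewrite y0 mul0r addr0 mulf_eq0 negb_or => /andP [xnz tnz].
  have z0 : z = 0 by move/eqP: hzt; rewrite mulf_eq0 (negbTE tnz) orbF => /eqP.
  rewrite y0 z0 in H4 H7 H8 H9 H10 H11.
  have eb0 : b0 = 0 by rewrite -H4 mul0r.
  have ea1 : a1 = 0 by rewrite -H7 mul0r.
  rewrite eb0 ea1 in H8 H9 H10 H11.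
  have ea0 : a0 = t^+2 by symmetry; from H10 h2.
  have eb1 : b1 = t^+2 by symmetry; from H11 h2.
  rewrite ea0 eb1 in H8 H9.
  have E1 : x^+2* m2^+2 = t^+2* m1^+2 by from H8 h2.
  have E2 : x^+2* m2 = t^+2* m1 by from H9 h2.
  have : x^+2* m2*(m2-m1) = 0.
    rewrite (_ : x^+2* m2*(m2-m1) = x^+2* m2^+2 - m1*(x^+2* m2)); last by ring.
    by rewrite E1 E2; ring.
  by move/eqP; rewrite !mulf_eq0 (negbTE d12) (negbTE nz2) (negbTE xnz).
have x0 : x = 0 by move/eqP: hxy; rewrite mulf_eq0 (negbTE ynz) orbF => /eqP.
move: hne; rewrite x0 mul0r add0r mulf_eq0 negb_or => /andP [_ znz].
have t0 : t = 0 by move/eqP: hzt; rewrite mulf_eq0 (negbTE znz) /= => /eqP.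
rewrite x0 t0 in H5 H6 H8 H9 H10 H11.
have eb1 : b1 = 0 by rewrite -H5 mul0r.
have ea0 : a0 = 0 by rewrite -H6 mul0r.
rewrite eb1 ea0 in H8 H9 H10 H11.
have eb0 : b0 = z^+2* m2^+2 by symmetry; from H10 h2.
have ea1 : a1 = z^+2* m2 by symmetry; from H11 h2.
rewrite eb0 ea1 in H8 H9.
have E1 : y^+2 = z^+2* m2^+2* m1 by from H8 h2.
have E2 : y^+2 = z^+2* m2* m1^+2 by from H9 h2.
have : z^+2* m2* m1*(m2-m1) = 0.
  rewrite (_ : z^+2* m2* m1*(m2-m1) = z^+2* m2^+2* m1 - z^+2* m2* m1^+2); last by ring.
  by rewrite -E1 -E2 subrr.
by move/eqP; rewrite !mulf_eq0 (negbTE d12) (negbTE nz2) (negbTE nz1) (negbTE znz).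
Qed.
Unset Implicit Arguments. Set Strict Implicit.

Theorem theorem5p3 (F : finFieldType) (char2 : (2 \in [pchar F])%N)
  (hq : (8 <= #|F|)%N) :
  (forall mu' mu'' : F, mu' != 0 -> mu' != 1 -> mu'' != 0 -> mu'' != 1 ->
     mu' != mu'' -> ~ same_orbit (ell mu') (ell mu''))
  /\ (forall mu : F, mu != 0 -> mu != 1 -> ~ same_orbit (ell mu) (Lc F)).
Proof.
have h2 : (2:F) = 0 := pcharf0 char2.
have hF : (7 < #|F|)%N by [].
split.
  move=> m1 m2 nz1 n11 nz2 n12 n12' [A [FA HL]].
  have [NA ea2 eb2 nc2] := nucleus h2 hF FA.
  have PA := polarA h2 NA.
  move: HL; rewrite /ell /line_through => /line_img [x [y [z [t [hU hW]]]]].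
  rewrite !lin_rv4 in hU hW.
  apply: (final_scalar h2 nz1 n11 nz2 n12 n12' nc2
    (x := x) (y := y) (z := z) (t := t) (a0 := alpha 0 A) (b0 := beta 0 A)
    (a1 := alpha 1 A) (b1 := beta 1 A)
    (Y0 := (rv4 0 1 0 0 *m A) 0 o0) (Y1 := (rv4 0 1 0 0 *m A) 0 o1)
    (Y2 := (rv4 0 1 0 0 *m A) 0 o2) (Y3 := (rv4 0 1 0 0 *m A) 0 o3)
    (Z0 := (rv4 1 0 0 0 *m A) 0 o0) (Z1 := (rv4 1 0 0 0 *m A) 0 o1)
    (Z2 := (rv4 1 0 0 0 *m A) 0 o2) (Z3 := (rv4 1 0 0 0 *m A) 0 o3)).
  - have := NA 2%N (rv4 0 m1 0 1); rewrite hU ea2 eb2 !qvK2 !rv4E => H; from H h2.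
  - have := NA 2%N (rv4 1 0 1 0); rewrite hW ea2 eb2 !qvK2 !rv4E => H; from H h2.
  - have := PA 2%N (rv4 0 m1 0 1) (rv4 1 0 1 0); rewrite hU hW ea2 eb2 !bvK2 !rv4E => H; from H h2.
  - have := PA 0%N (rv4 0 m1 0 1) (rv4 0 1 0 0); rewrite hU !bvK0 !bvK1 !bvK2 !rv4E => H; from H h2.
  - have := PA 1%N (rv4 0 m1 0 1) (rv4 0 1 0 0); rewrite hU !bvK0 !bvK1 !bvK2 !rv4E => H; from H h2.
  - have := PA 0%N (rv4 1 0 1 0) (rv4 1 0 0 0); rewrite hW !bvK0 !bvK1 !bvK2 !rv4E => H; from H h2.
  - have := PA 1%N (rv4 1 0 1 0) (rv4 1 0 0 0); rewrite hW !bvK0 !bvK1 !bvK2 !rv4E => H; from H h2.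
  - have := NA 0%N (rv4 0 m1 0 1); rewrite hU !qvK0 !qvK1 !qvK2 !rv4E => H; from H h2.
  - have := NA 1%N (rv4 0 m1 0 1); rewrite hU !qvK0 !qvK1 !qvK2 !rv4E => H; from H h2.
  - have := NA 0%N (rv4 1 0 1 0); rewrite hW !qvK0 !qvK1 !qvK2 !rv4E => H; from H h2.
  - have := NA 1%N (rv4 1 0 1 0); rewrite hW !qvK0 !qvK1 !qvK2 !rv4E => H; from H h2.
move=> mu nz n1 [A [FA HL]].
have [NA ea2 eb2 nc2] := nucleus h2 hF FA.
have PA := polarA h2 NA.
move: HL; rewrite /ell /Lc /line_through => /line_img [x [y [z [t [hU hW]]]]].
rewrite !lin_rv4 in hU hW.
have := PA 2%N (rv4 0 mu 0 1) (rv4 1 0 1 0).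
rewrite hU hW ea2 eb2 !bvK2 !rv4E => H.
have : gamma 2 A * (1 + mu) = 0 by symmetry; from H h2.
by move/eqP; rewrite mulf_eq0 (negbTE nc2) (negbTE (neq1 h2 n1)).
Qed.
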